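(* Let $k\ge1$ and $n:=2^k$. For each $x\in\langle C_k\rangle$, $C(x)$ is an isometric cycle of length $2n$ in $Q_n$ with flip sequence $(1,2,\dots,n,1,2,\dots,n)$, and the vertex sets of the cycles $C(x)$, $x\in\langle C_k\rangle$, form a partition of the vertex set of $Q_n$.
   Context: $Q_n$ is the $n$-dimensional hypercube: vertices are all subsets of $[n]=\{1,\dots,n\}$, with $x,y$ adjacent iff $|x\oplus y|=1$, where $\oplus$ is symmetric difference; an edge $\{x,x\oplus\{i\}\}$ has direction $i$. The flip sequence of a path/cycle is the sequence of directions of its consecutive edges. A subgraph is isometric if it preserves graph distances of $Q_n$. $\langle X\rangle$ denotes the set of all symmetric differences of finitely many members of the family $X$. Define $O_1:=C_1:=\emptyset$ and for $k\ge2$: $O_k:=\{\{2i-1,2i+1\}:1\le i\le 2^{k-1}-1\}$ and $C_k:=O_k\cup 2\cdot C_{k-1}$, where $2\cdot X$ doubles every element of every set in $X$. (All sets of $\langle C_k\rangle$ are subsets of $[n-1]$.) For $x\in\langle C_k\rangle$, $C(x)$ is the cycle with vertices $v_0,v_1,\dots,v_{2n-1}$ (cyclically), where $v_j:=x\oplus\{1,\dots,j\}$ for $0\le j\le n$ and $v_{n+j}:=x\oplus[n]\oplus\{1,\dots,j\}$ for $0\le j\le n-1$. *)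

(* Defs.v *)
From mathcomp Require Import all_boot.
Set Implicit Arguments. Unset Strict Implicit. Unset Printing Implicit Defensive.

(* Encoding: the ground set [n] = {1,...,n} is represented by 'I_n, the
   ordinal i : 'I_n standing for the element i+1.  Vertices of Q_n are
   subsets of [n], i.e. elements of {set 'I_n}. *)

Definition symdiff (T : finType) (A B : {set T}) : {set T} := (A :\: B) :|: (B :\: A).

Definition Qadj (n : nat) : rel {set 'I_n} := fun x y => #|symdiff x y| == 1.

Definition gdist (T : eqType) (e : rel T) (a b : T) (d : nat) : Prop :=
  (exists p : seq T, [/\ path e a p, last a p = b & size p = d]) /\
  (forall p : seq T, path e a p -> last a p = b -> d <= size p).

Definition pre (n j : nat) : {set 'I_n} := [set i : 'I_n | i < j].

Definition Cv (n : nat) (x : {set 'I_n}) (j : nat) : {set 'I_n} :=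
  if j <= n then symdiff x (pre n j)
  else symdiff (symdiff x [set: 'I_n]) (pre n (j - n)).

Definition cyc_verts (T : Type) (v : nat -> T) (L : nat) : seq T :=
  [seq v j | j <- iota 0 L].

Definition cyc_rel (T : eqType) (v : nat -> T) (L : nat) : rel T :=
  fun a b => has (fun j => ((a == v j) && (b == v (j.+1 %% L)))
                        || ((b == v j) && (a == v (j.+1 %% L)))) (iota 0 L).

(* v_0 ... v_(L-1) is a cycle of length L in Q_n with flip sequence s
   (L = size s; directions are 1-based elements of [n]) *)
Definition has_flip_seq (n : nat) (v : nat -> {set 'I_n}) (s : seq nat) : Prop :=
  forall j, j < size s ->
    v (j.+1 %% size s) = symdiff (v j) [set i : 'I_n | i.+1 == nth 0 s j].

Definition is_cycle_of_length (n : nat) (v : nat -> {set 'I_n}) (L : nat) : Prop :=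
  2 < L /\ uniq (cyc_verts v L) /\
  (forall j, j < L -> Qadj (v j) (v (j.+1 %% L))).

Definition isometric_cycle (n : nat) (v : nat -> {set 'I_n}) (L : nat) : Prop :=
  forall a b, a \in cyc_verts v L -> b \in cyc_verts v L ->
    forall d, gdist (@Qadj n) a b d <-> gdist (cyc_rel v L) a b d.

(* O_k and C_k, as lists of subsets of nat (1-based) *)
Definition Onat (k : nat) : seq (seq nat) :=
  if k < 2 then [::]
  else [seq [:: (2 * i).-1; (2 * i).+1] | i <- iota 1 (2 ^ k.-1 - 1)].

Fixpoint Cnat (k : nat) : seq (seq nat) :=
  match k with
  | 0 => [::]
  | 1 => [::]
  | k'.+1 => Onat k ++ [seq [seq 2 * a | a <- s] | s <- Cnat k']
  end.

Definition toSet (n : nat) (s : seq nat) : {set 'I_n} := [set i : 'I_n | i.+1 \in s].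

Definition Cset (k n : nat) : seq {set 'I_n} := [seq toSet n s | s <- Cnat k].

Inductive in_span (T : finType) (X : seq {set T}) : {set T} -> Prop :=
| span_nil : in_span X set0
| span_cons g x : g \in X -> in_span X x -> in_span X (symdiff g x).

(* Main.v *)
Require Import Defs.
From mathcomp Require Import all_boot zify.
Set Implicit Arguments. Unset Strict Implicit. Unset Printing Implicit Defensive.

Lemma card_count n (P : pred nat) : #|[set t : 'I_n | P t]| = count P (iota 0 n).
Proof.
rewrite -val_enum_ord count_map cardsE cardE /enum_mem size_filter.
by rewrite count_filter; apply: eq_count => t /=; rewrite !inE ?andbT.
Qed.

Lemma in_symdiff (T : finType) (A B : {set T}) t :
  (t \in symdiff A B) = (t \in A) (+) (t \in B).
Proof. by rewrite /symdiff !inE; case: (t \in A); case: (t \in B). Qed.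

Definition pat (n j t : nat) : bool := if j <= n then t < j else ~~ (t < j - n).

Lemma memCv n (x : {set 'I_n}) j (t : 'I_n) :
  (t \in Cv x j) = (t \in x) (+) pat n j t.
Proof.
rewrite /Cv /pat; case: ifP => _; rewrite !in_symdiff !inE //.
by rewrite addbT addNb addbN.
Qed.

Lemma count_lt_iota a N : count (fun m => m < a) (iota 0 N) = minn a N.
Proof.
elim: N => [|N IH]; first by rewrite /= minn0.
rewrite -addn1 iotaD count_cat IH /= add0n addn0.
case: (ltnP N a) => H /=; lia.
Qed.

Lemma count_xor_lt a b N :
  count (fun t => (t < a) (+) (t < b)) (iota 0 N) = maxn (minn a N) (minn b N) - minn (minn a N) (minn b N).
Proof.
elim: N => [|N IH]; first by rewrite /= !minn0.
rewrite -addn1 iotaD count_cat IH /= add0n addn0.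
case: (ltnP N a) => H1; case: (ltnP N b) => H2 /=; lia.
Qed.

Lemma count_neg (P : pred nat) s : count (fun t => ~~ P t) s = size s - count P s.
Proof. by rewrite -(count_predC P s) addKn. Qed.

Lemma count_eq_and (s : seq nat) a (p : pred nat) : uniq s ->
  count (fun i => (i == a) && p i) s = (a \in s) && p a.
Proof.
elim: s => [|x s IH] //= /andP [xs us]; rewrite IH // in_cons.
case: (eqVneq x a) => [<-|ne] /=; last by [].
by rewrite (negbTE xs) /= addn0.
Qed.

Lemma odd_count_xor (T : Type) (a c : pred T) s :
  odd (count (fun m => a m (+) c m) s) = odd (count a s) (+) odd (count c s).
Proof.
elim: s => [|x s IH] //=; rewrite !oddD IH !oddb.
by case: (a x); case: (c x); case: (odd (count a s)); case: (odd (count c s)).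
Qed.

Fixpoint inv (k : nat) (f : nat -> bool) (b : nat) : bool :=
  match k with
  | 0 => (b == 0) && f 0
  | k'.+1 => match b with
             | 0 => odd (count (fun m => f (2 * m)) (iota 0 (2 ^ k')))
             | b'.+1 => inv k' (fun m => f (2 * m).+1) b'
             end
  end.

Lemma inv_ext k f g b : (forall t, t < 2 ^ k -> f t = g t) -> inv k f b = inv k g b.
Proof.
elim: k f g b => [|k IH] f g b H /=; first by rewrite H.
case: b => [|b].
  congr odd; apply: eq_in_count => m; rewrite mem_iota => /andP [_ Hm].
  by apply: H; rewrite expnS; lia.
by apply: IH => m Hm; apply: H; rewrite expnS; lia.
Qed.

Lemma inv_xor k f g b : inv k (fun t => f t (+) g t) b = inv k f b (+) inv k g b.
Proof.
elim: k f g b => [|k IH] f g b /=; first by case: (b == 0).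
case: b => [|b]; last exact: IH.
exact: odd_count_xor.
Qed.

Lemma inv0 k b : inv k (fun _ => false) b = false.
Proof.
elim: k b => [|k IH] b /=; first by rewrite andbF.
case: b => [|b]; last exact: IH.
by rewrite count_pred0.
Qed.

Lemma CnatS k : Cnat k.+1 = Onat k.+1 ++ [seq [seq 2 * a | a <- s] | s <- Cnat k].
Proof. by case: k. Qed.

Lemma count_two a b N : a != b -> a < N -> b < N ->
  count (fun m => (m == a) || (m == b)) (iota 0 N) = 2.
Proof.
move=> ne ha hb.
have := count_predUI (pred1 a) (pred1 b) (iota 0 N).
rewrite !count_uniq_mem ?iota_uniq // !mem_iota /= ha hb.
rewrite [count (predI _ _) _](@eq_count _ _ pred0); last first.
  move=> m /=; apply/negbTE/negP => /andP [/eqP e1 /eqP e2].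
  by move: ne; rewrite -e1 -e2 eqxx.
by rewrite count_pred0 addn0 => ->.
Qed.

Lemma inv_gen k s b : s \in Cnat k -> inv k (fun t => t.+1 \in s) b = false.
Proof.
elim: k s b => [|k IH] s b //.
rewrite CnatS mem_cat => /orP [].
  rewrite /Onat; case: ifP => // hk /mapP [i]; rewrite mem_iota => /andP [i1 i2] ->; simpl in i2.
  case: b => [|b] /=.
    rewrite (@eq_in_count _ _ (fun m => (m == i.-1) || (m == i))); last first.
      move=> m _; rewrite !in_cons in_nil orbF.
      apply/idP/idP => /orP [] /eqP H; apply/orP; [left|right|left|right]; apply/eqP; lia.
    rewrite count_two //; lia.
  rewrite (@inv_ext _ _ (fun _ => false)) ?inv0 // => m _.
  rewrite !in_cons in_nil orbF; apply/negbTE; apply/negP => /orP [] /eqP; lia.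
move=> /mapP [s' hs' ->].
case: b => [|b] /=.
  rewrite (@eq_in_count _ _ pred0) ?count_pred0 // => m _ /=.
  by apply/negbTE; apply/negP => /mapP [y _]; lia.
rewrite -(IH s' b hs'); apply: inv_ext => m _.
have -> : (2 * m).+2 = 2 * m.+1 by lia.
by rewrite mem_map //; move=> u v; lia.
Qed.

Definition sf n (x : {set 'I_n}) (t : nat) : bool :=
  if (insub t : option 'I_n) is Some i then i \in x else false.

Lemma sf_val n (x : {set 'I_n}) (i : 'I_n) : sf x i = (i \in x).
Proof. by rewrite /sf valK. Qed.

Lemma sf_lt n (x : {set 'I_n}) t (H : t < n) : sf x t = (Ordinal H \in x).
Proof. exact: (sf_val x (Ordinal H)). Qed.

Lemma span_inv k (x : {set 'I_(2^k)}) : in_span (Cset k (2^k)) x ->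
  forall b, inv k (sf x) b = false.
Proof.
elim => [|g y hg _ IH] b.
  rewrite (@inv_ext _ _ (fun _ => false)) ?inv0 // => t ht.
  by rewrite (sf_lt _ ht) inE.
rewrite (@inv_ext _ _ (fun t => sf g t (+) sf y t)); last first.
  by move=> t ht; rewrite !(sf_lt _ ht) in_symdiff.
rewrite inv_xor IH addbF.
move: hg => /mapP [s hs ->].
rewrite (@inv_ext _ _ (fun t => t.+1 \in s)) ?inv_gen // => t ht.
by rewrite (sf_lt _ ht) inE.
Qed.

Lemma count_or_disj (T : Type) (a b : pred T) s : (forall x, ~~ (a x && b x)) ->
  count (fun x => a x || b x) s = count a s + count b s.
Proof.
move=> H; rewrite -count_predUI (@eq_count _ (predI a b) pred0) ?count_pred0 ?addn0 //.
by move=> x /=; apply/negbTE.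
Qed.

Definition pairs N (h : nat -> bool) : seq (seq nat) :=
  [seq [:: (2*i).-1; (2*i).+1] | i <- [seq i <- iota 1 (N-1) | odd (count h (iota 0 i))]].

Lemma pairs_even N h m : odd (count h (iota 0 N)) = false -> m < N ->
  odd (count (fun s => (2*m).+1 \in s) (pairs N h)) = h m.
Proof.
move=> hN hm; rewrite /pairs count_map count_filter.
set c := fun i => odd (count h (iota 0 i)).
rewrite (@eq_in_count _ _ (fun i => ((i == m.+1) && c i) || ((i == m) && c i))); last first.
  move=> i; rewrite mem_iota => /andP [i1 _] /=.
  rewrite !in_cons in_nil orbF.
  have -> : ((2 * m).+1 == (2 * i).-1) = (i == m.+1) by apply/eqP/eqP; lia.
  have -> : ((2 * m).+1 == (2 * i).+1) = (i == m) by apply/eqP/eqP; lia.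
  by rewrite andb_orl.
rewrite count_or_disj; last first.
  move=> i; apply/negP => /andP [/andP [/eqP e1 _] /andP [/eqP e2 _]]; lia.
rewrite !count_eq_and ?iota_uniq // !mem_iota oddD !oddb.
have cS : c m.+1 = c m (+) h m.
  by rewrite /c -addn1 iotaD count_cat oddD /= addn0 oddb.
rewrite cS.
case: (ltnP m.+1 N) => H1.
  have -> : (1 <= m.+1 < 1 + (N - 1)) = true by apply/andP; split; lia.
  case: (posnP m) => H2; first by rewrite H2 /c /= addbF.
  have -> : (m < 1 + (N - 1)) = true by apply/idP; lia.
  by rewrite /= addbC addbA addbb.
have -> : (1 <= m.+1 < 1 + (N - 1)) = false by apply/negbTE/negP => /andP [] ; lia.
have eN : m.+1 = N by lia.
have : c m.+1 = false by rewrite eN.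
rewrite cS => hc.
case: (posnP m) => H2; first by move: hc; rewrite H2 /c /=.
have -> : (m < 1 + (N - 1)) = true by apply/idP; lia.
by move: hc; rewrite /=; case: (c m); case: (h m).
Qed.

Lemma inv_span k f : (forall b, b <= k -> inv k f b = false) ->
  exists l, all (fun s => s \in Cnat k) l /\
    forall t, t < 2 ^ k -> f t = odd (count (fun s => t.+1 \in s) l).
Proof.
elim: k f => [|k IH] f H.
  exists [::]; split => // t ht; have -> : t = 0 by lia.
  by move: (H 0 (leqnn 0)) => /=.
have hpar : odd (count (fun m => f (2*m)) (iota 0 (2 ^ k))) = false by exact: (H 0 isT).
have [l1 [hl1 e1]] := IH (fun m => f (2*m).+1) (fun b hb => H b.+1 hb).
exists (pairs (2 ^ k) (fun m => f (2*m)) ++ [seq [seq 2 * a | a <- s] | s <- l1]).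
split.
  rewrite all_cat; apply/andP; split.
    apply/allP => s /mapP [i]; rewrite mem_filter mem_iota => /andP [_ /andP [i1 i2]] ->.
    rewrite CnatS mem_cat; apply/orP; left; rewrite /Onat; case: ifP => hk.
      have k0 : k = 0 by lia.
      by move: i2; rewrite k0 /=; lia.
    apply/mapP; exists i => //; rewrite mem_iota /=; lia.
  apply/allP => s /mapP [s' hs' ->]; rewrite CnatS mem_cat; apply/orP; right.
  by apply: map_f; exact: (allP hl1).
move=> t ht.
have [m [e | e]] : exists m, t = 2*m \/ t = (2*m).+1 by exists (t %/ 2); lia.
  rewrite e in ht *.
  rewrite count_cat oddD pairs_even //; last by move: ht; rewrite expnS; lia.
  rewrite count_map (@eq_count _ _ pred0) ?count_pred0 ?addbF // => s' /=.
  by apply/negbTE/negP => /mapP [y _]; lia.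
rewrite e in ht *.
rewrite count_cat oddD /pairs count_map count_filter.
rewrite (@eq_count _ _ pred0) ?count_pred0 /=; last first.
  move=> i /=; apply/negbTE/negP => /andP [+ _].
  by rewrite !in_cons in_nil orbF => /orP [] /eqP; lia.
rewrite count_map e1; last by move: ht; rewrite expnS; lia.
congr odd; apply: eq_count => s' /=.
have -> : (2 * m).+2 = 2 * m.+1 by lia.
by rewrite mem_map //; move=> u v; lia.
Qed.

Lemma fold_span k (l : seq (seq nat)) : all (fun s => s \in Cnat k) l ->
  in_span (Cset k (2 ^ k)) (foldr (@symdiff _) set0 [seq toSet (2 ^ k) s | s <- l]).
Proof.
elim: l => [|s l IH] /=; first by constructor.
move=> /andP [hs hl]; apply: span_cons; last exact: IH.
by apply: map_f.
Qed.

Lemma fold_mem n (l : seq (seq nat)) (t : 'I_n) :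
  (t \in foldr (@symdiff _) set0 [seq toSet n s | s <- l]) = odd (count (fun s => t.+1 \in s) l).
Proof.
elim: l => [|s l IH] /=; first by rewrite inE.
by rewrite in_symdiff IH inE oddD oddb.
Qed.

Lemma inv_span_set k (x : {set 'I_(2^k)}) :
  (forall b, b <= k -> inv k (sf x) b = false) -> in_span (Cset k (2 ^ k)) x.
Proof.
move=> H; have [l [hl e]] := inv_span H.
have -> : x = foldr (@symdiff _) set0 [seq toSet (2 ^ k) s | s <- l].
  apply/setP => t; rewrite fold_mem -e // -sf_val //.
exact: fold_span.
Qed.

Lemma H_S0 k j : j < 2 * 2 ^ k.+1 ->
  inv k.+1 (pat (2 ^ k.+1) j) 0 = odd ((j + 1) %/ 2).
Proof.
move=> hj /=; rewrite /pat; case: (leqP j (2 ^ k.+1)) => H.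
  rewrite (@eq_count _ _ (fun m => m < (j + 1) %/ 2)); last first.
    by move=> m; apply/idP/idP; lia.
  rewrite count_lt_iota; congr odd; rewrite expnS in H; lia.
rewrite (@eq_count _ _ (fun m => ~~ (m < (j - 2 ^ k.+1 + 1) %/ 2))); last first.
  by move=> m; congr negb; apply/idP/idP; lia.
rewrite count_neg size_iota count_lt_iota.
rewrite expnS in H hj *.
have e : (j + 1) %/ 2 = 2 ^ k + (j - 2 * 2 ^ k + 1) %/ 2 by lia.
have hb : (j - 2 * 2 ^ k + 1) %/ 2 <= 2 ^ k by lia.
rewrite e (minn_idPl hb) oddB // oddD.
by case: (odd (2 ^ k)); case: (odd _).
Qed.

Lemma H_SS k j b : j < 2 * 2 ^ k.+1 ->
  inv k.+1 (pat (2 ^ k.+1) j) b.+1 = inv k (pat (2 ^ k) (j %/ 2)) b.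
Proof.
move=> hj /=; apply: inv_ext => m hm; rewrite /pat.
rewrite expnS in hj *.
case: (leqP j (2 * 2 ^ k)) => H1; case: (leqP (j %/ 2) (2 ^ k)) => H2;
  try (apply/idP/idP; lia).
Qed.

Lemma H_0 j : j < 2 -> inv 0 (pat 1 j) 0 = (j == 1).
Proof. by case: j => [|[|]]. Qed.

Lemma H_inj k i j : i < 2 * 2 ^ k -> j < 2 * 2 ^ k ->
  (forall b, b <= k -> inv k (pat (2 ^ k) i) b = inv k (pat (2 ^ k) j) b) -> i = j.
Proof.
elim: k i j => [|k IH] i j hi hj H.
  have := H 0 (leqnn 0); rewrite !H_0 //.
  by clear H; move: hi hj; case: i => [|[|i]] //; case: j => [|[|j]].
have e2 : i %/ 2 = j %/ 2.
  apply: IH; [move: hi; rewrite expnS; lia | move: hj; rewrite expnS; lia |].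
  by move=> b hb; rewrite -!H_SS //; apply: H.
have e0 := H 0 isT; rewrite !H_S0 // in e0.
have ei : (i + 1) %/ 2 = i %/ 2 + i %% 2 by lia.
have ej : (j + 1) %/ 2 = j %/ 2 + j %% 2 by lia.
rewrite ei ej e2 !oddD in e0.
have e1 : odd (i %% 2) = odd (j %% 2).
  by move: e0; case: (odd (j %/ 2)) => /=; [move/negb_inj|].
have e3 : i %% 2 = j %% 2 by rewrite !modn2 !oddb in e1 *; rewrite e1.
lia.
Qed.

Lemma partition k (v : {set 'I_(2 ^ k)}) :
  exists! x : {set 'I_(2 ^ k)},
    in_span (Cset k (2 ^ k)) x /\ v \in cyc_verts (Cv x) (2 * 2 ^ k).
Proof.
pose F : 'I_(2 * 2 ^ k) -> {ffun 'I_k.+1 -> bool} :=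
  fun j => [ffun b : 'I_k.+1 => inv k (pat (2 ^ k) j) b].
have Finj : injective F.
  move=> i j /ffunP e; apply: val_inj; apply: (@H_inj k); [exact: ltn_ord | exact: ltn_ord |] => b hb.
  by have := e (Ordinal (hb : b < k.+1)); rewrite !ffunE.
have Fonto := inj_card_onto Finj.
pose w := [ffun b : 'I_k.+1 => inv k (sf v) b].
have [j ej] : exists j, w = F j.
  apply/codomP; apply: Fonto.
  by rewrite card_ffun card_bool !card_ord expnS.
have key : forall (y : {set 'I_(2 ^ k)}) (j' : nat), v = Cv y j' ->
    forall b, inv k (sf v) b = inv k (sf y) b (+) inv k (pat (2 ^ k) j') b.
  move=> y j' -> b; rewrite -inv_xor; apply: inv_ext => t ht.
  by rewrite !(sf_lt _ ht) memCv.
have wj : forall b, b <= k -> inv k (sf v) b = inv k (pat (2 ^ k) j) b.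
  move=> b hb; have /ffunP e := ej.
  by have := e (Ordinal (hb : b < k.+1)); rewrite !ffunE.
pose x := [set t : 'I_(2 ^ k) | (t \in v) (+) pat (2 ^ k) j t].
exists x; split.
  split.
    apply: inv_span_set => b hb.
    rewrite (@inv_ext _ _ (fun t => sf v t (+) pat (2 ^ k) j t)); last first.
      by move=> t ht; rewrite !(sf_lt _ ht) inE.
    by rewrite inv_xor wj // addbb.
  apply/mapP; exists (val j); first by rewrite mem_iota /=.
  by apply/setP => t; rewrite memCv inE -addbA addbb addbF.
move=> y [hy /mapP [j' hj' ev]].
rewrite mem_iota in hj'.
have ejj : j' = j.
  apply: (@H_inj k); [lia | exact: ltn_ord |] => b hb.
  by rewrite -wj // (key _ _ ev b) span_inv.
by apply/setP => t; rewrite inE ev memCv ejj -addbA addbb addbF.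
Qed.

Ltac bsolve := repeat (match goal with
  | |- context [(?a <= ?b)] => case: (leqP a b) => ?
  | |- context [(?a == ?b :> nat)] => case: (@eqP _ a b) => ?
  end); simpl; try done; try (exfalso; lia).

Lemma nth_ii n j : j < n + n ->
  nth 0 (iota 1 n ++ iota 1 n) j = if j < n then j.+1 else (j - n).+1.
Proof.
move=> hj; rewrite nth_cat size_iota; case: ltnP => h; rewrite nth_iota ?add1n //; lia.
Qed.

Lemma step n (x : {set 'I_n}) j : j < n + n ->
  Cv x (j.+1 %% (n + n)) =
  symdiff (Cv x j) [set i : 'I_n | i.+1 == nth 0 (iota 1 n ++ iota 1 n) j].
Proof.
move=> hj; apply/setP => t; rewrite in_symdiff !memCv inE nth_ii // -addbA; congr addb.
have ht := ltn_ord t.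
case: (ltnP j.+1 (n + n)) => h.
  rewrite modn_small // /pat; bsolve.
have -> : j.+1 = n + n by lia.
rewrite modnn /pat; bsolve.
Qed.

Lemma sdK (T : finType) (A S : {set T}) : symdiff A (symdiff A S) = S.
Proof. by apply/setP => t; rewrite !in_symdiff addKb. Qed.

Lemma sdC (T : finType) (A B : {set T}) : symdiff A B = symdiff B A.
Proof. by apply/setP => t; rewrite !in_symdiff addbC. Qed.

Lemma QadjC n (a b : {set 'I_n}) : Qadj a b = Qadj b a.
Proof. by rewrite /Qadj sdC. Qed.

Lemma card_single n c : 0 < c <= n -> #|[set i : 'I_n | i.+1 == c]| = 1.
Proof.
move=> hc; rewrite (card_count n (fun i => i.+1 == c)) (@eq_count _ _ (pred1 c.-1)); last first.
  by move=> i /=; apply/eqP/eqP; lia.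
rewrite count_uniq_mem ?iota_uniq //.
by have -> : (c.-1 \in iota 0 n) = true by rewrite mem_iota; apply/andP; split; lia.
Qed.

Lemma adj n (x : {set 'I_n}) j : j < n + n -> Qadj (Cv x j) (Cv x (j.+1 %% (n + n))).
Proof.
move=> hj; rewrite step // /Qadj sdK card_single // nth_ii //.
by case: (ltnP j n) => h; apply/andP; split; lia.
Qed.

Lemma pat_xor_card n i j : i <= j -> j < n + n ->
  count (fun t => pat n i t (+) pat n j t) (iota 0 n) = minn (j - i) (n + n - (j - i)).
Proof.
move=> hij hj; rewrite /pat.
case: (leqP i n) => hi; case: (leqP j n) => hjn.
- by rewrite count_xor_lt; lia.
- rewrite (@eq_count _ _ (fun t => ~~ ((t < i) (+) (t < j - n)))); last first.
    by move=> t /=; rewrite addbN.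
  by rewrite count_neg size_iota count_xor_lt; lia.
- lia.
- rewrite (@eq_count _ _ (fun t => (t < i - n) (+) (t < j - n))); last first.
    by move=> t /=; rewrite addbN addNb negbK.
  by rewrite count_xor_lt; lia.
Qed.

Lemma ham n (x : {set 'I_n}) i j : i <= j -> j < n + n ->
  #|symdiff (Cv x i) (Cv x j)| = minn (j - i) (n + n - (j - i)).
Proof.
move=> hij hj.
have -> : symdiff (Cv x i) (Cv x j) = [set t : 'I_n | pat n i t (+) pat n j t].
  by apply/setP => t; rewrite in_symdiff !memCv inE addbACA addbb.
by rewrite (card_count n (fun t => pat n i t (+) pat n j t)) pat_xor_card.
Qed.

Lemma tri n (a c z : {set 'I_n}) : #|symdiff a z| <= #|symdiff a c| + #|symdiff c z|.
Proof.
apply: leq_trans (subset_leq_card _) (leq_card_setU _ _).1.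
apply/subsetP => t; rewrite in_setU !in_symdiff.
by case: (t \in a); case: (t \in c); case: (t \in z).
Qed.

Lemma Q_lower n (a : {set 'I_n}) p : path (@Qadj n) a p -> #|symdiff a (last a p)| <= size p.
Proof.
elim: p a => [|c p IH] a /=.
  move=> _; rewrite (_ : symdiff a a = set0) ?cards0 //.
  by apply/setP => t; rewrite in_symdiff addbb inE.
move=> /andP [hac hp]; move: hac; rewrite /Qadj => /eqP hac; have := IH c hp.
move=> h2; apply: (leq_trans (tri a c (last c p))); by rewrite hac add1n ltnS.
Qed.

Lemma Q_upper n m (a b : {set 'I_n}) : #|symdiff a b| = m ->
  exists p, [/\ path (@Qadj n) a p, last a p = b & size p = m].
Proof.
elim: m a => [|m IH] a h.
  exists [::]; split => //=; apply/setP => t.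
  have : (t \in symdiff a b) = (t \in set0) by rewrite (cards0_eq h).
  rewrite in_symdiff inE.
  by case: (t \in a); case: (t \in b).
have : 0 < #|symdiff a b| by rewrite h.
case/card_gt0P => t ht.
pose a' := symdiff a [set t].
have h' : #|symdiff a' b| = m.
  have := cardsD1 t (symdiff a b); rewrite ht h add1n => [[e]]; rewrite e.
  apply: eq_card => u.
  rewrite in_setD1 !in_symdiff inE; move: ht; rewrite in_symdiff.
  case: (eqVneq u t) => [->|ne] /=; last by rewrite addbF.
  by case: (t \in a); case: (t \in b).
have [p [hp hl hs]] := IH a' h'.
exists (a' :: p); split => //=; last by rewrite hs.
by rewrite hp andbT /Qadj sdK cards1.
Qed.

Lemma gdist_iff (T : eqType) (e : rel T) a b D :
  (forall p, path e a p -> last a p = b -> D <= size p) ->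
  (exists p, [/\ path e a p, last a p = b & size p = D]) ->
  forall d, gdist e a b d <-> d = D.
Proof.
move=> hlow [q [hq hl hs]] d; split.
  move=> [[p [hp hlp hsp]] hmin].
  have := hmin q hq hl; have := hlow p hp hlp; lia.
move=> ->; split; first by exists q.
exact: hlow.
Qed.

Fixpoint walk (T : Type) (V : nat -> T) i s : seq T :=
  if s is s'.+1 then V i.+1 :: walk V i.+1 s' else [::].

Lemma walk_path (T : Type) (e : rel T) V i s : (forall m, e (V m) (V m.+1)) ->
  [/\ path e (V i) (walk V i s), last (V i) (walk V i s) = V (i + s)
    & size (walk V i s) = s].
Proof.
move=> H; elim: s i => [|s IH] i /=; first by rewrite addn0.
have [h1 h2 h3] := IH i.+1.
by rewrite H h1 h2 h3 addnS.
Qed.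

Lemma rev_exists (T : eqType) (e : rel T) : (forall x y, e x y = e y x) ->
  forall a b p, path e b p -> last b p = a ->
  exists q, [/\ path e a q, last a q = b & size q = size p].
Proof.
move=> sym a b p hp hl; exists (rev (belast b p)); split.
- rewrite -hl rev_path; apply: sub_path hp => u v; by rewrite sym.
- case: p hp hl => [|c p] /= _; first by move=> ->.
  by move=> _; rewrite rev_cons last_rcons.
- by rewrite size_rev size_belast.
Qed.

Lemma cyc_step n (x : {set 'I_n}) m : 0 < n ->
  cyc_rel (Cv x) (n + n) (Cv x (m %% (n + n))) (Cv x (m.+1 %% (n + n))).
Proof.
move=> hn; apply/hasP; exists (m %% (n + n)).
  by rewrite mem_iota add0n ltn_pmod //; lia.
have -> : (m %% (n + n)).+1 %% (n + n) = m.+1 %% (n + n).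
  by rewrite -[(m %% _).+1]addn1 modnDml addn1.
by rewrite !eqxx.
Qed.

Lemma cyc_sym (T : eqType) (v : nat -> T) L a b : cyc_rel v L a b = cyc_rel v L b a.
Proof. by rewrite /cyc_rel; apply: eq_has => j; rewrite orbC. Qed.

Lemma cyc_Q n (x : {set 'I_n}) a b : cyc_rel (Cv x) (n + n) a b -> Qadj a b.
Proof.
move=> /hasP [j]; rewrite mem_iota add0n => hj /orP [] /andP [/eqP -> /eqP ->].
  exact: adj.
by rewrite QadjC; exact: adj.
Qed.

Lemma cyc_exists_le n (x : {set 'I_n}) i j : 0 < n -> i <= j -> j < n + n ->
  exists p, [/\ path (cyc_rel (Cv x) (n + n)) (Cv x i) p, last (Cv x i) p = Cv x j
    & size p = #|symdiff (Cv x i) (Cv x j)|].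
Proof.
move=> hn hij hj; rewrite ham //.
pose V := fun m => Cv x (m %% (n + n)).
have hV : forall m, cyc_rel (Cv x) (n + n) (V m) (V m.+1) by move=> m; exact: cyc_step.
case: (leqP (j - i) (n + n - (j - i))) => hc.
  have [h1 h2 h3] := walk_path i (j - i) hV.
  exists (walk V i (j - i)); rewrite /V in h1 h2 h3 *.
  rewrite !modn_small in h1 h2 h3 *; try lia.
  by rewrite subnKC in h2 h3 *; [split => //; lia|..].
have [h1 h2 h3] := walk_path j (n + n - (j - i)) hV.
rewrite /V in h1 h2 h3.
have e : j + (n + n - (j - i)) = i + (n + n) by lia.
rewrite e modnDr (modn_small hj) (@modn_small i) in h1 h2; last lia.
have [q [hq hql hqs]] := rev_exists (@cyc_sym _ _ _) h1 h2.
by exists q; split => //; rewrite hqs h3; lia.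
Qed.

Lemma iso n (x : {set 'I_n}) i j d : 0 < n -> i < n + n -> j < n + n ->
  gdist (@Qadj n) (Cv x i) (Cv x j) d <-> gdist (cyc_rel (Cv x) (n + n)) (Cv x i) (Cv x j) d.
Proof.
move=> hn hi hj.
set D := #|symdiff (Cv x i) (Cv x j)|.
have ex : exists p, [/\ path (cyc_rel (Cv x) (n + n)) (Cv x i) p,
    last (Cv x i) p = Cv x j & size p = D].
  case: (leqP i j) => hij; first exact: cyc_exists_le.
  have [p [hp hl hs]] := cyc_exists_le x hn (ltnW hij) hi.
  have [q [hq hql hqs]] := rev_exists (@cyc_sym _ _ _) hp hl.
  by exists q; split => //; rewrite hqs hs /D sdC.
have e1 := @gdist_iff _ (@Qadj n) (Cv x i) (Cv x j) D
  (fun p hp hl => eq_ind _ (fun z => #|symdiff (Cv x i) z| <= size p) (Q_lower hp) _ hl)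
  (Q_upper (erefl D)) d.
have e2 : gdist (cyc_rel (Cv x) (n + n)) (Cv x i) (Cv x j) d <-> d = D.
  apply: gdist_iff => // p hp hl; rewrite /D -hl; apply: Q_lower; apply: sub_path hp => u v; exact: cyc_Q.
by split => H; [apply/e2; apply/e1 | apply/e1; apply/e2].
Qed.

Lemma Cv_inj k (x : {set 'I_(2 ^ k)}) i j : i < 2 * 2 ^ k -> j < 2 * 2 ^ k ->
  Cv x i = Cv x j -> i = j.
Proof.
move=> hi hj e; apply: (H_inj hi hj) => b _; apply: inv_ext => t ht.
have : (Ordinal ht \in Cv x i) = (Ordinal ht \in Cv x j) by rewrite e.
rewrite !memCv => h.
by move/(congr1 (addb (Ordinal ht \in x))): h; rewrite !addKb.
Qed.

Theorem mainTheorem5 (k n : nat) (hk : 1 <= k) (hn : n = 2 ^ k) :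
  (forall x : {set 'I_n}, in_span (Cset k n) x ->
     [/\ is_cycle_of_length (Cv x) (2 * n),
         isometric_cycle (Cv x) (2 * n)
       & has_flip_seq (Cv x) (iota 1 n ++ iota 1 n)]) /\
  (forall v : {set 'I_n},
     exists! x : {set 'I_n}, in_span (Cset k n) x /\ v \in cyc_verts (Cv x) (2 * n)).
Proof.
subst n; split; last exact: partition.
move=> x _.
have hn : 2 ^ 1 <= 2 ^ k by rewrite leq_exp2l.
rewrite expn1 in hn.
have e2 : 2 * 2 ^ k = 2 ^ k + 2 ^ k by lia.
split.
- split; first lia.
  split.
    rewrite /cyc_verts map_inj_in_uniq ?iota_uniq // => i j.
    by rewrite !mem_iota => /andP [_ hi] /andP [_ hj]; apply: Cv_inj.
  by move=> j hj; rewrite e2; apply: adj; lia.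
- move=> a b /mapP [i hi ea] /mapP [j hj eb] d; subst a b; rewrite mem_iota in hi; rewrite mem_iota in hj.
  case/andP: hi => _ hi; case/andP: hj => _ hj.
  rewrite e2; apply: iso; lia.
- move=> j; rewrite size_cat size_iota => hj; exact: step.
Qed.
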